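(* Let $K$ be a field, $X$ a set, $F\subseteq K\langle X\rangle$ and $f\in(F)$. Let $Q=(V,E,X,s,t,l)$ be a labelled quiver such that $f$ is compatible with $Q$ and all elements of $F$ are uniformly compatible with $Q$. Then, for every representation $\mathcal{R}=(\mathcal{V},\varphi)$ of $Q$ over $K$ that is consistent with the labelling $l$ and such that every realization of every element of $F$ with respect to $\mathcal{R}$ is zero, every realization of $f$ with respect to $\mathcal{R}$ is zero.
   Context: $K\langle X\rangle$ is the free algebra of noncommutative polynomials over $K$ in indeterminates $X$, with monomials the words in $\langle X\rangle$ (including the empty word $1$); $\operatorname{supp}(f)$ is the set of monomials with nonzero coefficient; $(F)$ is the two-sided ideal generated by $F$. A labelled quiver $Q=(V,E,X,s,t,l)$ has vertices $V$, edges $E$, source/target maps $s,t:E\to V$ and labelling $l:E\to X$. A nonempty path $p=e_n\cdots e_1$ (with $s(e_{i+1})=t(e_i)$) has label $l(e_n)\cdots l(e_1)$, source $s(e_1)$, target $t(e_n)$; each vertex $v$ has an empty path with label $1$ and source and target $v$. For a monomial $m$, $\sigma(m)=\{(s(p),t(p)) : p \text{ a path with } l(p)=m\}$; for a polynomial $f$, $\sigma(f)=\bigcap_{m\in\operatorname{supp}(f)}\sigma(m)$ (so $\sigma(0)=V\times V$). $f$ is compatible with $Q$ if $\sigma(f)\neq\emptyset$, and uniformly compatible if it is compatible and all $m\in\operatorname{supp}(f)$ have the same set $\sigma(m)$. $K\langle X\rangle_{v,w}=\{f : (v,w)\in\sigma(f)\}$. A representation $(\mathcal{V},\varphi)$ of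 $Q$ over $K$ assigns to each vertex $v$ a $K$-vector space $\mathcal{V}_v$ and to each edge $e$ a $K$-linear map $\varphi(e):\mathcal{V}_{s(e)}\to\mathcal{V}_{t(e)}$; it is consistent with $l$ if for any two nonempty paths $e_n\cdots e_1$ and $d_n\cdots d_1$ with the same source and target and equal labels, $\varphi(e_n)\cdots\varphi(e_1)=\varphi(d_n)\cdots\varphi(d_1)$. For a consistent representation and $v,w\in V$, $\varphi_{v,w}:K\langle X\rangle_{v,w}\to L(\mathcal{V}_v,\mathcal{V}_w)$ is the $K$-linear map with $\varphi_{v,w}(l(e_n\cdots e_1))=\varphi(e_n)\cdots\varphi(e_1)$ for nonempty paths $e_n\cdots e_1$ from $v$ to $w$, and $\varphi_{v,v}(1)=\mathrm{id}_{\mathcal{V}_v}$. For $f\in K\langle X\rangle_{v,w}$, $\varphi_{v,w}(f)$ is called a realization of $f$ with respect to the representation; the realizations of $f$ are all $\varphi_{v,w}(f)$ with $(v,w)\in\sigma(f)$. *)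

(* Defs.v *)
From Stdlib Require List.
From HB Require Import structures.
From mathcomp Require Import all_boot all_order all_algebra.
Set Implicit Arguments. Unset Strict Implicit. Unset Printing Implicit Defensive.
Import GRing.Theory.
Local Open Scope ring_scope.

(* A monomial is a word over X, i.e. a [seq X]; the empty word is 1.
   A noncommutative polynomial is a coefficient function on words with
   finite support. *)
Definition ncpoly (K : fieldType) (X : Type) := seq X -> K.

Definition is_ncpoly (K : fieldType) (X : Type) (f : ncpoly K X) : Prop :=
  exists ms : seq (seq X), forall m, f m != 0 -> List.In m ms.

Definition nc_zero (K : fieldType) (X : Type) : ncpoly K X := fun _ => 0.
Definition nc_add (K : fieldType) (X : Type) (f g : ncpoly K X) : ncpoly K X :=
  fun m => f m + g m.
Definition nc_mul (K : fieldType) (X : Type) (f g : ncpoly K X) : ncpoly K X :=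
  fun m => \sum_(i < (size m).+1) f (take i m) * g (drop i m).

Inductive in_ideal (K : fieldType) (X : Type) (F : ncpoly K X -> Prop) :
    ncpoly K X -> Prop :=
| ideal_gen g : F g -> in_ideal F g
| ideal_zero : in_ideal F (@nc_zero K X)
| ideal_add a b : in_ideal F a -> in_ideal F b -> in_ideal F (nc_add a b)
| ideal_mul a g b : is_ncpoly a -> is_ncpoly b -> in_ideal F g ->
    in_ideal F (nc_mul (nc_mul a g) b)
| ideal_ext a b : in_ideal F a -> a =1 b -> in_ideal F b.

Record lquiver (X : Type) := LQuiver {
  qV : Type; qE : Type; qs : qE -> qV; qt : qE -> qV; ql : qE -> X }.

Section Quiver.
Variables (X : Type) (Q : lquiver X).

(* A path p = e_n ... e_1 is represented by the list [:: e_n; ...; e_1];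
   QPath v w p : p is a path with source v and target w (the empty list is
   the empty path at v). *)
Inductive QPath (v : qV Q) : qV Q -> seq (qE Q) -> Prop :=
| qpath_nil : QPath v v [::]
| qpath_cons e p : QPath v (qs e) p -> QPath v (qt e) (e :: p).

Definition label (p : seq (qE Q)) : seq X := map (@ql X Q) p.

Definition sigma_mono (m : seq X) (v w : qV Q) : Prop :=
  exists p, QPath v w p /\ label p = m.

Definition sigma_poly (K : fieldType) (f : ncpoly K X) (v w : qV Q) : Prop :=
  forall m, f m != 0 -> sigma_mono m v w.

Definition compatible (K : fieldType) (f : ncpoly K X) : Prop :=
  exists v w, sigma_poly f v w.

Definition unif_compatible (K : fieldType) (f : ncpoly K X) : Prop :=
  compatible f /\
  forall m m', f m != 0 -> f m' != 0 ->
    forall v w, sigma_mono m v w <-> sigma_mono m' v w.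

Variables (K : fieldType) (Vs : qV Q -> lmodType K)
          (phi : forall e : qE Q, {linear Vs (qs e) -> Vs (qt e)}).

Local Unset Implicit Arguments.
Inductive PathMap (v : qV Q) : forall w : qV Q, seq (qE Q) -> (Vs v -> Vs w) -> Prop :=
| pmap_nil : PathMap v v [::] id
| pmap_cons e p (g : Vs v -> Vs (qs e)) :
    PathMap v (qs e) p g -> PathMap v (qt e) (e :: p) (fun u => phi e (g u)).
Arguments PathMap {v w}.
Arguments pmap_nil {v}.
Arguments pmap_cons {v} e p g.
Local Set Implicit Arguments.

Definition consistent : Prop :=
  forall v w p p' (g g' : Vs v -> Vs w),
    p <> [::] -> p' <> [::] -> label p = label p' ->
    PathMap p g -> PathMap p' g' -> g =1 g'.

(* realization v w f h : h = phi_{v,w}(f)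
     = sum_{m in supp f} f(m) * phi_{v,w}(m),
   where phi_{v,w}(m) is the composite along a path from v to w labelled m. *)
Definition realization (f : ncpoly K X) (v w : qV Q) (h : Vs v -> Vs w) : Prop :=
  exists (ms : seq (seq X)) (g : seq X -> Vs v -> Vs w),
    [/\ List.NoDup ms,
        (forall m, f m != 0 <-> List.In m ms),
        (forall m, List.In m ms -> exists p, label p = m /\ PathMap p (g m)) &
        (forall u, h u = \sum_(m <- ms) f m *: g m u)].

End Quiver.

Arguments sigma_mono {X} Q m v w.
Arguments sigma_poly {X} Q {K} f v w.
Arguments compatible {X} Q {K} f.
Arguments unif_compatible {X} Q {K} f.
Arguments realization {X Q K Vs} phi f v w h.

(* Main.v *)
Require Import Defs.
From HB Require Import structures.
From mathcomp Require Import all_boot all_order all_algebra.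
From Stdlib Require Import ClassicalEpsilon.
From Stdlib Require List Eqdep.
Set Implicit Arguments. Unset Strict Implicit. Unset Printing Implicit Defensive.
Import GRing.Theory.
Local Open Scope ring_scope.

Definition cX (X : Type) : Type := X.
Definition cX_eq (X : Type) (x y : cX X) : bool :=
  if excluded_middle_informative (x = y) then true else false.
Lemma cX_eqP (X : Type) : Equality.axiom (@cX_eq X).
Proof. by move=> x y; rewrite /cX_eq; case: excluded_middle_informative => H; constructor. Qed.
HB.instance Definition _ (X : Type) := hasDecEq.Build (cX X) (@cX_eqP X).

Lemma sum_pred1 (T : eqType) (R : nmodType) (r : seq T) (y : T) (F : T -> R) :
  uniq r -> \sum_(x <- r) (if x == y then F x else 0) = if y \in r then F y else 0.
Proof.
elim: r => [|x r IH] /=; first by rewrite big_nil.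
move/andP=> [xr ur]; rewrite big_cons IH // in_cons.
have [exy|ne] := eqVneq x y.
  by subst x; rewrite /= (negbTE xr) addr0.
by rewrite /= add0r.
Qed.

Lemma sum_ord1 (R : nmodType) n k (x : R) :
  \sum_(i < n) (if (i : nat) == k then x else 0) = if (k < n)%N then x else 0.
Proof.
elim: n => [|n IH]; first by rewrite big_ord0.
rewrite big_ord_recr /= IH.
case: (ltngtP k n) => h.
- by rewrite addr0 ltnS (ltnW h).
- by rewrite addr0 ltnS leqNgt h.
- by rewrite add0r h ltnS leqnn.
Qed.

Section Esum.
Variables (K : fieldType) (X : Type) (M : lmodType K).
Local Notation W := (seq (cX X)).

Definition covers (f : ncpoly K X) (ms : seq W) := forall m : W, f m != 0 -> m \in ms.
Definition Esum (f : ncpoly K X) (Phi : W -> M) (ms : seq W) : M :=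
  \sum_(m <- undup ms) f m *: Phi m.

Lemma Esum_filter f Phi ms :
  Esum f Phi ms = \sum_(m <- undup ms | f m != 0) f m *: Phi m.
Proof.
rewrite /Esum [RHS]big_mkcond /=; apply: eq_bigr => m _.
by case: eqP => // ->; rewrite scale0r.
Qed.

Lemma Esum_indep f Phi ms ms' : covers f ms -> covers f ms' ->
  Esum f Phi ms = Esum f Phi ms'.
Proof.
move=> c c'; rewrite !Esum_filter -!(big_filter (undup _)).
apply: perm_big; apply: uniq_perm; rewrite ?filter_uniq ?undup_uniq //.
move=> m; rewrite !mem_filter !mem_undup.
by case E: (f m != 0) => //=; rewrite (c _ E) (c' _ E).
Qed.

Lemma Esum_ext f f' Phi ms : f =1 f' -> Esum f Phi ms = Esum f' Phi ms.
Proof. by move=> e; apply: eq_bigr => m _; rewrite e. Qed.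

Lemma Esum_Phi_ext f Phi Phi' ms : Phi =1 Phi' -> Esum f Phi ms = Esum f Phi' ms.
Proof. by move=> e; apply: eq_bigr => m _; rewrite e. Qed.

Lemma Esum_add a b Phi ms :
  Esum (nc_add a b) Phi ms = Esum a Phi ms + Esum b Phi ms.
Proof. by rewrite /Esum -big_split /=; apply: eq_bigr => m _; rewrite scalerDl. Qed.

Lemma Esum_zero Phi ms : Esum (@nc_zero K X) Phi ms = 0.
Proof. by rewrite /Esum big1 // => m _; rewrite scale0r. Qed.

Lemma covers_mul (a g : ncpoly K X) sa sg : covers a sa -> covers g sg ->
  covers (nc_mul a g) [seq (x ++ y : W) | x <- sa, y <- sg].
Proof.
move=> ca cg m; rewrite /nc_mul => nz.
case: (pickP (fun i : 'I_(size m).+1 => a (take i m) * g (drop i m) != 0)) => [i nzi | all0].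
  move: nzi; rewrite mulf_eq0 negb_or => /andP[na ng].
  by rewrite -(cat_take_drop i m); apply: allpairs_f; [apply: ca | apply: cg].
case/negP: nz; rewrite big1 ?eqxx // => i _; apply/eqP; exact: negbFE (all0 i).
Qed.

Lemma sum_cover (a : ncpoly K X) s (y : W) (G : W -> K) : covers a s ->
  (forall x, a x = 0 -> G x = 0) ->
  \sum_(x <- undup s) (if x == y then G x else 0) = G y.
Proof.
move=> c h; rewrite sum_pred1 ?undup_uniq //; case: ifP => // yn.
rewrite h //; apply/eqP; apply: contraFT yn => /c; by rewrite mem_undup.
Qed.

Lemma S_lemma (a g : ncpoly K X) sa sg (m : W) : covers a sa -> covers g sg ->
  \sum_(x <- undup sa) \sum_(y <- undup sg) (if m == x ++ y then a x * g y else 0)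
  = \sum_(i < (size m).+1) a (take i m) * g (drop i m).
Proof.
move=> ca cg.
transitivity (\sum_(i < (size m).+1) \sum_(x <- undup sa) \sum_(y <- undup sg)
   (if (x == take i m :> W) && (y == drop i m :> W) then a x * g y else 0)); last first.
  apply: eq_bigr => i _.
  transitivity (\sum_(x <- undup sa) (if x == take i m :> W then
     \sum_(y <- undup sg) (if y == drop i m :> W then a x * g y else 0) else 0)).
    apply: eq_bigr => x _; case: eqP => _ //=; by rewrite big1.
  rewrite (@sum_cover a sa (take i m) (fun x => \sum_(y <- undup sg)
     (if y == drop i m :> W then a x * g y else 0))) //.
    by rewrite (@sum_cover g sg (drop i m) (fun y => a (take i m) * g y)) // => y ->; rewrite mulr0.
  move=> x ->; rewrite big1 // => y _; by rewrite mul0r if_same.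
rewrite [RHS]exchange_big; apply: eq_bigr => x _; rewrite [RHS]exchange_big; apply: eq_bigr => y _.
transitivity (\sum_(i < (size m).+1) (if (i : nat) == size x then
   (if m == x ++ y then a x * g y else 0) else 0)).
  rewrite sum_ord1; case: eqP => [->|]; last by rewrite if_same.
  by rewrite size_cat ltnS leq_addr.
apply: eq_bigr => i _.
have -> : ((x == take i m :> W) && (y == drop i m :> W)) = ((i : nat) == size x) && (m == x ++ y).
  apply/idP/idP.
    move/andP=> [/eqP-> /eqP->]; rewrite cat_take_drop eqxx size_takel ?eqxx //.
    by rewrite -ltnS ltn_ord.
  move/andP=> [/eqP ei /eqP em].
  have ht : take i m = x by rewrite ei em take_size_cat.
  have hd : drop i m = y by rewrite ei em drop_size_cat.
  by rewrite ht hd !eqxx.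
by case: eqP => _; case: eqP.
Qed.

Lemma Esum_mul (a g : ncpoly K X) sa sg ms Phi : covers a sa -> covers g sg ->
  covers (nc_mul a g) ms ->
  Esum (nc_mul a g) Phi ms =
  \sum_(x <- undup sa) \sum_(y <- undup sg) (a x * g y) *: Phi (x ++ y).
Proof.
move=> ca cg cm.
rewrite (Esum_indep _ cm (covers_mul ca cg)) /Esum.
set P := [seq (x ++ y : W) | x <- sa, y <- sg].
transitivity (\sum_(m <- undup P) \sum_(x <- undup sa) \sum_(y <- undup sg)
   (if m == x ++ y then (a x * g y) *: Phi m else 0)).
  apply: eq_bigr => m _; rewrite /nc_mul -(S_lemma m ca cg) scaler_suml.
  apply: eq_bigr => x _; rewrite scaler_suml; apply: eq_bigr => y _.
  by case: eqP => _ //; rewrite scale0r.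
rewrite exchange_big; apply: eq_big_seq => x xin; rewrite exchange_big.
apply: eq_big_seq => y yin.
rewrite (@sum_pred1 _ _ (undup P) (x ++ y) (fun m => (a x * g y) *: Phi m)) ?undup_uniq //.
by rewrite mem_undup allpairs_f // -mem_undup.
Qed.

Lemma Esum_mul_l (a g : ncpoly K X) sa sg ms Phi : covers a sa -> covers g sg ->
  covers (nc_mul a g) ms ->
  Esum (nc_mul a g) Phi ms = \sum_(x <- undup sa) a x *: Esum g (fun y => Phi (x ++ y)) sg.
Proof.
move=> ca cg cm; rewrite (Esum_mul _ ca cg cm); apply: eq_bigr => x _.
rewrite /Esum scaler_sumr; apply: eq_bigr => y _; by rewrite scalerA.
Qed.

Lemma Esum_mul_r (a g : ncpoly K X) sa sg ms Phi : covers a sa -> covers g sg ->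
  covers (nc_mul a g) ms ->
  Esum (nc_mul a g) Phi ms = \sum_(y <- undup sg) g y *: Esum a (fun x => Phi (x ++ y)) sa.
Proof.
move=> ca cg cm; rewrite (Esum_mul _ ca cg cm) exchange_big; apply: eq_bigr => y _.
rewrite /Esum scaler_sumr; apply: eq_bigr => x _; by rewrite scalerA mulrC.
Qed.

End Esum.

Lemma In_mem (T : eqType) (s : seq T) x : List.In x s <-> x \in s.
Proof.
elim: s => [|y s IH] //=; rewrite in_cons; split.
  by case=> [->|/IH ->]; rewrite ?eqxx ?orbT.
by case/orP=> [/eqP->|/IH]; [left|right].
Qed.

Arguments In_mem {T s x}.

Lemma NoDup_uniq (T : eqType) (s : seq T) : List.NoDup s -> uniq s.
Proof.
elim: s => [|x s IH] //= nd; inversion nd; subst.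
rewrite IH // andbT; apply/negP => /In_mem; done.
Qed.

Lemma uniq_NoDup (T : eqType) (s : seq T) : uniq s -> List.NoDup s.
Proof.
elim: s => [|x s IH] /=; first by constructor.
case/andP=> nx us; constructor; last exact: IH.
by move/In_mem; apply/negP.
Qed.

Lemma sum_In_ext (I : Type) (R : nmodType) (s : seq I) (F G : I -> R) :
  (forall m, List.In m s -> F m = G m) -> \sum_(m <- s) F m = \sum_(m <- s) G m.
Proof.
elim: s => [|x s IH] h; first by rewrite !big_nil.
rewrite !big_cons h /=; last by left.
by rewrite IH // => m hm; apply: h; right.
Qed.

Section Quiv.
Variables (X : Type) (Q : lquiver X) (K : fieldType) (Vs : qV Q -> lmodType K)
  (phi : forall e : qE Q, {linear Vs (qs e) -> Vs (qt e)}).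
Local Notation PM := (PathMap X Q K Vs phi).

Lemma pm_lin v w p g : PM v w p g -> forall (c : K) x y, g (c *: x + y) = c *: g x + g y.
Proof.
elim=> [|e p' g' _ IH] c x y //=.
by rewrite IH linearP.
Qed.

Lemma pm_0 v w p g : PM v w p g -> g 0 = 0.
Proof.
move=> h; have := pm_lin h 1 0 0; rewrite !scale1r addr0 => E.
by apply: (addrI (g 0)); rewrite addr0 -E.
Qed.

Lemma pm_sum v w p g : PM v w p g -> forall (I : Type) (r : seq I) (c : I -> K) (x : I -> Vs v),
  g (\sum_(i <- r) c i *: x i) = \sum_(i <- r) c i *: g (x i).
Proof.
move=> h I r c x; elim: r => [|i r IH]; first by rewrite !big_nil (pm_0 h).
by rewrite !big_cons (pm_lin h) IH.
Qed.

Lemma pm_cat x w p1 g1 : PM x w p1 g1 -> forall v p2 g2, PM v x p2 g2 ->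
  PM v w (p1 ++ p2) (fun u => g1 (g2 u)).
Proof.
elim=> [|e p g _ IH] v p2 g2 h2 /=; first exact: h2.
by apply: pmap_cons; apply: IH.
Qed.

Lemma pm_split v w p g : PM v w p g -> forall a b, label p = a ++ b ->
  exists x p1 p2 g1 g2, [/\ label p1 = a, label p2 = b, PM x w p1 g1, PM v x p2 g2
     & g =1 (fun u => g1 (g2 u))].
Proof.
elim=> [|e p' g' hp IH] a b /=.
  case: a => [|? ?] //; case: b => [|? ?] // _.
  by exists v, [::], [::], id, id; split => //; constructor.
case: a => [|c a] /=.
  move=> lb; exists (qt e), [::], (e :: p'), id, (fun u => phi e (g' u)); split => //.
  - constructor.
  - exact: pmap_cons.
case=> ec /IH [x [p1 [p2 [g1 [g2 [l1 l2 h1 h2 eg]]]]]].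
exists x, (e :: p1), p2, (fun y => phi e (g1 y)), g2; split => //=.
- by rewrite /label /= ec -l1.
- exact: pmap_cons.
- by move=> u /=; rewrite eg.
Qed.

Lemma qpath_pm v w p : QPath v w p -> exists g, PM v w p g.
Proof.
elim=> [|e p' _ [g IH]]; first by exists id; constructor.
by eexists; apply: pmap_cons; exact: IH.
Qed.

Lemma pm_qpath v w p g : PM v w p g -> QPath v w p.
Proof. by elim=> [|e p' g' _ IH]; constructor. Qed.

Lemma pm_nil v w p g : PM v w p g -> p = [::] ->
  forall u, existT (fun w => Vs w : Type) w (g u) = existT (fun w => Vs w : Type) v u.
Proof. by case. Qed.

Lemma pm_unique v w p p' g g' : consistent phi -> PM v w p g -> PM v w p' g' ->
  label p = label p' -> g =1 g'.
Proof.
move=> hc h h' el.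
case: p el h => [|e p] el h.
  case: p' el h' => [|e' p'] // _ h' u.
  have := pm_nil h (erefl _) u; rewrite -(pm_nil h' (erefl _) u).
  exact: Eqdep.EqdepTheory.inj_pair2.
case: p' el h' => [|e' p'] // el h'.
have := hc v w (e :: p) (e' :: p') g g'. by apply...
Qed.

Definition pmc (m : seq X) (v w : qV Q) : Vs v -> Vs w :=
  match excluded_middle_informative (exists g : Vs v -> Vs w, exists p, label p = m /\ PM v w p g) with
  | left H => proj1_sig (constructive_indefinite_description _ H)
  | right _ => fun _ => 0
  end.
Arguments pmc : clear implicits.

Lemma pmc_ex m v w : sigma_mono Q m v w -> exists p, label p = m /\ PM v w p (pmc m v w).
Proof.
move=> [p [qp lp]]; have [g hg] := qpath_pm qp.
rewrite /pmc; case: excluded_middle_informative => [H|H].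
  by case: (constructive_indefinite_description _ H).
by case: H; exists g, p.
Qed.

Lemma pmc_spec m v w p g : consistent phi -> label p = m -> PM v w p g -> pmc m v w =1 g.
Proof.
move=> hc lp h.
have [p' [lp' h']] := pmc_ex (ex_intro _ p (conj (pm_qpath h) lp)).
by apply: (pm_unique hc h' h); rewrite lp lp'.
Qed.

Lemma pmc_none m v w : ~ sigma_mono Q m v w -> forall u, pmc m v w u = 0.
Proof.
move=> ns u; rewrite /pmc; case: excluded_middle_informative => // H.
case: ns; case: H => g [p [lp h]]; exists p; split => //; exact: pm_qpath h.
Qed.


Local Notation W := (seq (cX X)).

Definition Jp (g : ncpoly K X) := is_ncpoly g /\
  forall (al be : W) v w (u : Vs v) (ms : seq W), covers g ms ->
    Esum g (fun m : W => pmc (al ++ m ++ be) v w u) ms = 0.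

Lemma cover_of (g : ncpoly K X) : is_ncpoly g -> exists s : seq W, covers g s.
Proof. by case=> ms h; exists ms => m /h /(@In_mem _ (ms : seq W)). Qed.

Lemma ncpoly_of (g : ncpoly K X) (s : seq W) : covers g s -> is_ncpoly g.
Proof. by move=> c; exists s => m /c /(@In_mem _ s). Qed.

Lemma ideal_J (F : ncpoly K X -> Prop) :
  (forall g, F g -> is_ncpoly g) ->
  (forall g, F g -> unif_compatible Q g) ->
  consistent phi ->
  (forall g, F g -> forall v w, sigma_poly Q g v w ->
     forall h, realization phi g v w h -> forall u, h u = 0) ->
  forall f, in_ideal F f -> Jp f.
Proof.
move=> hF hU hc hZ f; elim=> {f}.
- move=> g Fg; split; first exact: hF.
  move=> al be v w u ms cg.
  case: (excluded_middle_informative (exists m : W, g m != 0 /\ sigma_mono Q (al ++ m ++ be) v w))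
    => [[m0 [nz0 [p [qp lp]]]] | none]; last first.
    rewrite /Esum big1 // => m _.
    have [->|nz] := eqVneq (g m) 0; first by rewrite scale0r.
    rewrite pmc_none ?scaler0 // => sm; apply: none; exists m; split => //.
  have [g0 h0] := qpath_pm qp.
  have [y [p1 [p2 [g1 [g2 [l1 l2 h1 h2 _]]]]]] := pm_split h0 lp.
  have [x [p3 [p4 [g3 [g4 [l3 l4 h3 h4 _]]]]]] := pm_split h2 l2.
  have sm0 : sigma_mono Q m0 x y by exists p3; split => //; exact: pm_qpath h3.
  have [_ hu] := hU g Fg.
  have smxy : forall m, g m != 0 -> sigma_mono Q m x y.
    by move=> m nz; apply/(hu m0 m nz0 nz x y).
  have key : forall m : W, g m != 0 -> pmc (al ++ m ++ be) v w u = g1 (pmc m x y (g4 u)).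
    move=> m nz; have [pm [lpm hpm]] := pmc_ex (smxy m nz).
    have hp := pm_cat h1 (pm_cat hpm h4).
    apply: (pmc_spec hc _ hp).
    by rewrite /label !map_cat -/(label _) -/(label _) -/(label _) l1 lpm l4.
  rewrite Esum_filter.
  transitivity (\sum_(m <- undup ms | g m != 0) g m *: g1 (pmc m x y (g4 u))).
    by apply: eq_bigr => m nz; rewrite key.
  rewrite -big_filter -(pm_sum h1).
  set ms' := [seq m <- undup ms | g m != 0].
  have -> : \sum_(i <- ms') g i *: pmc i x y (g4 u) = 0; last exact: pm_0 h1.
  apply: (hZ g Fg x y smxy (fun u' => \sum_(i <- ms') g i *: pmc i x y u')).
  exists ms', (fun m => pmc m x y); split => //.
  + by apply: (@uniq_NoDup _ (ms' : seq W)); rewrite filter_uniq ?undup_uniq.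
  + move=> m; rewrite (@In_mem _ (ms' : seq W)) mem_filter mem_undup.
    split; [by move=> nz; rewrite nz (cg _ nz) | by case/andP].
  + move=> m /(@In_mem _ (ms' : seq W)); rewrite mem_filter => /andP[nz _].
    exact: pmc_ex (smxy m nz).
- split; first by exists [::] => m; rewrite /nc_zero eqxx.
  by move=> *; exact: Esum_zero.
- move=> a b _ [ia Ja] _ [ib Jb]; have [sa ca] := cover_of ia; have [sb cb] := cover_of ib.
  have cab : covers (nc_add a b) (sa ++ sb).
    move=> m; rewrite /nc_add mem_cat => nz.
    have [za|/ca ->] := eqVneq (a m) 0; last by [].
    by rewrite (cb m) ?orbT //; move: nz; rewrite za add0r.
  split; first exact: ncpoly_of cab.
  move=> al be v w u ms cm.
  have cL : covers (nc_add a b) (ms ++ sa ++ sb) by move=> m /cm; rewrite mem_cat => ->.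
  rewrite (Esum_indep _ cm cL) Esum_add (Ja _ _ _ _ _ _) ?(Jb _ _ _ _ _ _) ?addr0 //.
    by move=> m /cb; rewrite !mem_cat => ->; rewrite !orbT.
  by move=> m /ca; rewrite !mem_cat => ->; rewrite !orbT.
- move=> a g b ia ib _ [ig Jg].
  have [sa ca] := cover_of ia; have [sb cb] := cover_of ib; have [sg cg] := cover_of ig.
  have c1 := covers_mul ca cg.
  have c2 := covers_mul c1 cb.
  split; first exact: ncpoly_of c2.
  move=> al be v w u ms cm.
  rewrite (Esum_mul_r _ c1 cb cm) big1 // => y _.
  rewrite (Esum_mul_l _ ca cg c1) big1 ?scaler0 // => x _.
  rewrite (@Esum_Phi_ext _ _ _ _ _ (fun z : W => pmc ((al ++ x) ++ z ++ (y ++ be)) v w u)).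
    by rewrite Jg ?scaler0.
  by move=> z /=; rewrite !catA.
- move=> a b _ [ia Ja] e; have [sa ca] := cover_of ia.
  have cb : covers b sa by move=> m; rewrite -e; apply: ca.
  split; first exact: ncpoly_of cb.
  move=> al be v w u ms cm.
  have -> : Esum b (fun m : W => pmc (al ++ m ++ be) v w u) ms =
            Esum a (fun m : W => pmc (al ++ m ++ be) v w u) ms.
    by apply: Esum_ext => m; rewrite e.
  by apply: Ja => m; rewrite e; apply: cm.
Qed.

End Quiv.

Theorem theorem5p7 (K : fieldType) (X : Type) (F : ncpoly K X -> Prop)
  (f : ncpoly K X) (Q : lquiver X)
  (Vs : qV Q -> lmodType K)
  (phi : forall e : qE Q, {linear Vs (qs e) -> Vs (qt e)}) :
  (forall g, F g -> is_ncpoly g) ->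
  in_ideal F f ->
  compatible Q f ->
  (forall g, F g -> unif_compatible Q g) ->
  consistent phi ->
  (forall g, F g -> forall v w, sigma_poly Q g v w ->
     forall h, realization phi g v w h -> forall u, h u = 0) ->
  forall v w, sigma_poly Q f v w ->
    forall h : Vs v -> Vs w, realization phi f v w h -> forall u, h u = 0.
Proof.
move=> hF hI _ hU hc hZ v w _ h [ms [g [nd hiff hpath hh]]] u.
have [_ Jf] := ideal_J hF hU hc hZ hI.
have uq : uniq (ms : seq (seq (cX X))) by apply: NoDup_uniq.
have cov : covers f (ms : seq (seq (cX X))).
  by move=> m /hiff /(@In_mem _ (ms : seq (seq (cX X)))).
rewrite hh -[RHS](Jf [::] [::] v w u _ cov).
have -> : Esum f (fun m : seq (cX X) => @pmc _ _ _ _ phi ([::] ++ m ++ [::]) v w u) ms =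
          Esum f (fun m : seq (cX X) => @pmc _ _ _ _ phi m v w u) ms.
  by apply: Esum_Phi_ext => m /=; rewrite cats0.
rewrite /Esum undup_id //.
apply: sum_In_ext => m hm.
have [p [lp hp]] := hpath m hm.
by rewrite (pmc_spec hc lp hp).
Qed.
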